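(* Let $c<d$ be positive integers and let $X_{c,d}\subset\mathbb{P}^5$ be the threefold defined over $\overline{\mathbb{Q}}$ by $$x_0^c+x_1^c+x_2^c-x_3^c-x_4^c-x_5^c=0,\qquad x_0^d+x_1^d+x_2^d-x_3^d-x_4^d-x_5^d=0.$$ Then the singular locus of $X_{c,d}$ is finite. More precisely, if $[\xi_0,\dots,\xi_5]$ is a singular point of $X_{c,d}$ and $\xi_i,\xi_j$ are two non-zero coordinates, then $\xi_i^{2(d-c)}=\xi_j^{2(d-c)}$. *)

(* Defs.v *)
From HB Require Import structures.
From mathcomp Require Import all_boot all_order all_algebra all_field.
From mathcomp Require Import mpoly.
Set Implicit Arguments. Unset Strict Implicit. Unset Printing Implicit Defensive.
Import Order.TTheory GRing.Theory Num.Theory.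
Local Open Scope ring_scope.

Definition sgn6 (i : 'I_6) : algC := if (i < 3)%N then 1 else -1.

Definition Fpoly (e : nat) : {mpoly algC[6]} :=
  \sum_(i < 6) sgn6 i *: ('X_i ^+ e).

Definition eqns (c d : nat) (k : 'I_2) : {mpoly algC[6]} :=
  if k == 0 then Fpoly c else Fpoly d.

Definition onX (c d : nat) (x : 'I_6 -> algC) : Prop :=
  (exists i, x i != 0) /\ forall k : 'I_2, (eqns c d k).@[x] = 0.

Definition jacobian (c d : nat) (x : 'I_6 -> algC) : 'M[algC]_(2, 6) :=
  \matrix_(k < 2, j < 6) ((mderiv j (eqns c d k)).@[x]).

(* x represents a singular point of the complete intersection X_{c,d}
   (Jacobian criterion: the Jacobian has rank < codimension 2) *)
Definition singular_pt (c d : nat) (x : 'I_6 -> algC) : Prop :=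
  onX c d x /\ (\rank (jacobian c d x) < 2)%N.

(* Main.v *)
Require Import Defs.
From HB Require Import structures.
From mathcomp Require Import all_boot all_order all_algebra all_field.
From mathcomp Require Import mpoly.
From mathcomp Require Import ring zify.
Import GRing.Theory Num.Theory.
Local Open Scope ring_scope.

Lemma L0 e (i j : 'I_6) (x : 'I_6 -> algC) :
  (mderiv j ('X_i ^+ e : {mpoly algC[6]})).@[x] = (i == j)%:R * e%:R * x j ^+ e.-1.
Proof.
rewrite mpolyXn mderivX mevalZ mevalX mulmnE mnm1E.
have [<-|ne] := eqVneq i j; last by rewrite /= mul0n !mul0r.
rewrite /= mul1n mul1r; congr (_ * _).
rewrite (bigD1 i) //= big1 ?mulr1.
  by rewrite mnmBE mulmnE mnm1E eqxx mul1n subn1.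
move=> k nk; rewrite mnmBE mulmnE mnm1E eq_sym (negbTE nk) /=.
by rewrite expr0.
Qed.
Lemma S1 (F : fieldType) (A : 'M[F]_(2,6)) r (i : 'I_6) a :
  \sum_(k < 6) A r k * ((k == i)%:R * a) = A r i * a.
Proof.
rewrite (bigD1 i) //= eqxx mul1r big1 ?addr0 // => k /negbTE->.
by rewrite mul0r mulr0.
Qed.

Lemma ord2E (r : 'I_2) : r = 0 \/ r = 1.
Proof. by case: r => [[|[|//]]] ?; [left|right]; apply/val_inj. Qed.

Lemma minor0 (F : fieldType) (A : 'M[F]_(2,6)) : (\rank A < 2)%N ->
  forall i j, A 0 i * A 1 j = A 0 j * A 1 i.
Proof.
move=> rk i j; apply/eqP; rewrite -subr_eq0; apply/negPn/negP => nz.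
set dl := _ - _ in nz.
pose B : 'M[F]_(6,2) := \matrix_(k, l) (if l == 0 then
   ((k==i)%:R * (A 1 j/dl) - (k==j)%:R * (A 1 i/dl)) else
   ((k==j)%:R*(A 0 i/dl) - (k==i)%:R * (A 0 j/dl))).
have AB : A *m B = 1%:M.
  apply/matrixP => r l; rewrite !mxE.
  under eq_bigr do rewrite mxE.
  by case: (ord2E l) => ->; case: (ord2E r) => -> /=;
   under eq_bigr do rewrite mulrBr; rewrite sumrB !S1 /dl; field.
have := mxrankM_maxl A B; rewrite AB mxrank1.
by move=> /leq_ltn_trans /(_ rk); rewrite ltnn.
Qed.

Lemma L1 e (j : 'I_6) (x : 'I_6 -> algC) :
  (mderiv j (Fpoly e)).@[x] = sgn6 j * e%:R * x j ^+ e.-1.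
Proof.
rewrite /Fpoly (big_morph _ (@mderivD _ _ j) (@mderiv0 _ _ j)) (big_morph _ (@mevalD _ _ x) (@meval0 _ _ x)).
under eq_bigr do rewrite mderivZ mevalZ L0.
rewrite (bigD1 j) //= eqxx big1 ?addr0; first by rewrite mul1r mulrA.
by move=> k /negbTE->; rewrite !mul0r mulr0.
Qed.

Lemma jacE c d x (k : 'I_2) j : jacobian c d x k j =
  sgn6 j * (if k == 0 then c else d)%:R * x j ^+ (if k == 0 then c else d).-1.
Proof. by rewrite /jacobian mxE /eqns; case: ifP => _; rewrite L1. Qed.

Lemma sgn6_neq0 j : sgn6 j != 0.
Proof. by rewrite /sgn6; case: ifP => _; rewrite ?oppr_eq0 oner_eq0. Qed.

Lemma keyK c d x (hc : (0 < c)%N) (hcd : (c < d)%N) : singular_pt c d x ->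
  forall i j : 'I_6, x i != 0 -> x j != 0 -> x i ^+ (d - c) = x j ^+ (d - c).
Proof.
move=> [_ rk] i j xi xj.
have := minor0 _ _ rk i j; rewrite !jacE /=.
have cn : (c%:R : algC) != 0 by rewrite pnatr_eq0 -lt0n.
have dn : (d%:R : algC) != 0 by rewrite pnatr_eq0 -lt0n (ltn_trans hc).
have sij := mulf_neq0 (mulf_neq0 (sgn6_neq0 i) (sgn6_neq0 j)) (mulf_neq0 cn dn).
have eD : d.-1 = (c.-1 + (d - c))%N by rewrite -subn1 -subn1; lia.
rewrite eD !exprD => E.
have E2 : (sgn6 i * sgn6 j * (c%:R * d%:R)) * (x i ^+ c.-1 * x j ^+ c.-1) * x j ^+ (d - c)
   = (sgn6 i * sgn6 j * (c%:R * d%:R)) * (x i ^+ c.-1 * x j ^+ c.-1) * x i ^+ (d - c).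
  by apply: etrans; last apply: etrans; [|exact: E|]; ring.
apply/esym/(mulfI _ E2); apply: mulf_neq0 => //.
by apply: mulf_neq0; apply: expf_neq0.
Qed.

Theorem mainTheorem4 (c d : nat) (hc : (0 < c)%N) (hcd : (c < d)%N) :
  (exists (n : nat) (P : 'I_n -> 'I_6 -> algC),
      forall x, singular_pt c d x ->
        exists (k : 'I_n) (l : algC), forall i, x i = l * P k i)
  /\
  (forall x, singular_pt c d x ->
     forall i j : 'I_6, x i != 0 -> x j != 0 ->
       x i ^+ (2 * (d - c)) = x j ^+ (2 * (d - c))).
Proof.
split; last first.
  move=> x sx i j xi xj.
  by rewrite mulnC !exprM (keyK _ _ _ hc hcd sx _ _ xi xj).
have m0 : (0 < d - c)%N by rewrite subn_gt0.
have [z zP] := C_prim_root_exists m0.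
set m := (d - c)%N in m0 zP *.
exists #|{ffun 'I_6 -> 'I_m.+1}|.
exists (fun k i => let f : {ffun 'I_6 -> 'I_m.+1} := enum_val k in if (f i : nat) == 0%N then 0 else z ^+ (f i).-1).
move=> x sx.
have [[i0 xi0] _] := sx.1.
pose g (j : 'I_6) : 'I_m.+1 := if x j == 0 then ord0 else
  if [pick k : 'I_m | x j == x i0 * z ^+ k] is Some k then lift ord0 k else ord0.
exists (enum_rank [ffun j => g j]), (x i0) => j.
rewrite /= enum_rankK !ffunE /g.
have [->|xj] := eqVneq (x j) 0; first by rewrite eqxx mulr0.
have e1 : (x j / x i0) ^+ m = 1.
  by rewrite exprMn exprVn (keyK _ _ _ hc hcd sx _ _ xj xi0) divff // expf_neq0.
have [k hk] := prim_rootP zP e1.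
case: pickP => [k' /eqP -> | /(_ k)]; last first.
  by rewrite -hk mulrC divfK // eqxx.
by rewrite lift0.
Qed.
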